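(* For $n\ge3$, the priority lattice $\Pi(n)$ is not distributive.
   Context: $[n]_0=\{0,\dots,n\}$. A priority forest on $[n]_0$ is a rooted forest with vertex set $[n]_0$ whose component trees $T_0,T_1,\dots$ are increasing (each non-root vertex has a larger label than its parent) and satisfy: for $j<k$ every label of $T_j$ is smaller than every label of $T_k$. The priority lattice $\Pi(n)$ is the set of priority forests on $[n]_0$, ordered by $P\le P'$ iff $E(P)\subseteq E(P')$, together with an extra element $\hat1$ greater than all priority forests; it is a lattice. *)

(* Defs.v *)
From mathcomp Require Import all_boot.
Set Implicit Arguments. Unset Strict Implicit. Unset Printing Implicit Defensive.

(* Vertex set [n]_0 = {0,...,n} is 'I_n.+1.
   A rooted forest on [n]_0 whose trees are increasing is encoded by its
   parent map: par v = None iff v is a root, par v = Some u means the edge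
   u -> v (u parent of v), and every non-root vertex has a smaller-labelled
   parent.  Such a map has no cycles, so it is exactly an increasing rooted
   forest. *)
Definition vtx (n : nat) := 'I_n.+1.
Definition parent_map (n : nat) := {ffun vtx n -> option (vtx n)}.

Definition increasing n (par : parent_map n) : Prop :=
  forall u v : vtx n, par v = Some u -> (u < v)%N.

Definition adj n (par : parent_map n) : rel (vtx n) :=
  fun u v => (par v == Some u) || (par u == Some v).
Definition same_tree n (par : parent_map n) (x y : vtx n) : bool :=
  connect (adj par) x y.

(* Component trees can be listed T_0, T_1, ... so that for j < k every label
   of T_j is smaller than every label of T_k: i.e. any two distinct
   components are separated, one lying entirely below the other. *)
Definition ordered_components n (par : parent_map n) : Prop :=
  forall x y : vtx n, ~~ same_tree par x y ->
    (forall a b, same_tree par x a -> same_tree par y b -> (a < b)%N) \/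
    (forall a b, same_tree par x a -> same_tree par y b -> (b < a)%N).

Definition priority_forest n (par : parent_map n) : Prop :=
  increasing par /\ ordered_components par.

Definition PForest (n : nat) := {par : parent_map n | priority_forest par}.

Definition edge_sub n (P Q : PForest n) : Prop :=
  forall u v : vtx n, proj1_sig P v = Some u -> proj1_sig Q v = Some u.

Definition Pi (n : nat) := option (PForest n).

Definition Pi_le n (x y : Pi n) : Prop :=
  match x, y with
  | _, None => True
  | None, Some _ => False
  | Some P, Some Q => edge_sub P Q
  end.

Definition is_lub T (le : T -> T -> Prop) (x y j : T) : Prop :=
  le x j /\ le y j /\ forall w, le x w -> le y w -> le j w.
Definition is_glb T (le : T -> T -> Prop) (x y m : T) : Prop :=
  le m x /\ le m y /\ forall w, le w x -> le w y -> le w m.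

Definition distributive_lattice T (le : T -> T -> Prop) : Prop :=
  forall x y z yz lhs xy xz rhs : T,
    is_lub le y z yz -> is_glb le x yz lhs ->
    is_glb le x y xy -> is_glb le x z xz -> is_lub le xy xz rhs ->
    lhs = rhs.

(* Main.v *)
Require Import Defs.
From mathcomp Require Import all_boot.
From mathcomp Require Import zify.
Set Implicit Arguments. Unset Strict Implicit. Unset Printing Implicit Defensive.

Section Star.
Variable n : nat.

Definition star (r k : nat) : parent_map n :=
  [ffun v : vtx n => if (r < v <= r + k)%N then Some (inord r) else None].

Lemma star_some r k (v u : vtx n) : star r k v = Some u ->
  (r < v <= r + k)%N /\ u = inord r.
Proof. by rewrite /star ffunE; case: ifP => // H [<-]. Qed.

Lemma ordered_gen (par : parent_map n) (c : vtx n -> nat) :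
  (forall a b : vtx n, (a <= b)%N -> (c a <= c b)%N) ->
  (forall u v, par v = Some u -> c u = c v) ->
  (forall x y, c x = c y -> connect (adj par) x y) ->
  ordered_components par.
Proof.
move=> H1 H2 H3.
have Hc : forall x a, same_tree par x a -> c x = c a.
  move=> x a Hxa.
  have Hcl : closed (adj par) [pred z | c z == c x].
    move=> u v; rewrite /adj /= => /orP [/eqP/H2 E | /eqP/H2 E]; by rewrite !inE E.
  by have := closed_connect Hcl Hxa; rewrite !inE eqxx => /esym/eqP.
move=> x y Hxy.
have Hne : c x <> c y by move=> /H3; rewrite /same_tree in Hxy; move/negP: Hxy.
case: (ltngtP (c x) (c y)) => [lt|lt|eq] //.
- left => a b /Hc Ha /Hc Hb; rewrite ltnNge; apply/negP => /H1; lia.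
- right => a b /Hc Ha /Hc Hb; rewrite ltnNge; apply/negP => /H1; lia.
Qed.

Lemma star_pf r k : (r + k <= n)%N -> priority_forest (star r k).
Proof.
move=> Hrk; split.
  move=> u v /star_some [H ->]; rewrite inordK; lia.
pose root : vtx n := inord r.
have Hroot : nat_of_ord root = r by rewrite /root inordK //; lia.
have Hcr : forall z : vtx n, (r <= z <= r + k)%N ->
    connect (adj (star r k)) root z /\ connect (adj (star r k)) z root.
  move=> z Hz.
  have [Ez|Nz] := eqVneq z root; first by rewrite Ez connect0.
  have Ha : star r k z = Some root.
    rewrite /star ffunE ifT //.
    have : nat_of_ord z != r by apply: contra Nz => /eqP E; apply/eqP/val_inj; rewrite /= E Hroot.
    move: Hz; lia.
  by split; apply: connect1; rewrite /adj Ha eqxx ?orbT.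
apply: (@ordered_gen _ (fun v : vtx n => if (r <= v <= r + k)%N then r else nat_of_ord v)).
- move=> a b Hab; do 2 case: ifP => //; lia.
- move=> u v /star_some [H ->]; rewrite inordK; last lia.
  rewrite ifT; last lia. rewrite ifT //; lia.
- move=> x y; case: ifP => Hx; case: ifP => Hy.
  + move=> _; have [_ A] := Hcr x Hx; have [B _] := Hcr y Hy.
    exact: connect_trans A B.
  + move=> E; move: Hy; rewrite -E; lia.
  + move=> E; move: Hx; rewrite E; lia.
  + by move=> /val_inj ->; apply: connect0.
Qed.

End Star.

Theorem lemma5p5 (n : nat) : (3 <= n)%N -> ~ distributive_lattice (@Pi_le n).
Proof.
move=> Hn D.
have hX : (2 + 1 <= n)%N by lia.
pose X : PForest n := exist _ (star n 2 1) (star_pf hX).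
have hY : (0 + 2 <= n)%N by lia.
pose Y : PForest n := exist _ (star n 0 2) (star_pf hY).
have hZ : (1 + 1 <= n)%N by lia.
pose Z : PForest n := exist _ (star n 1 1) (star_pf hZ).
have hB : (0 + 0 <= n)%N by lia.
pose B : PForest n := exist _ (star n 0 0) (star_pf hB).
have Bno : forall w : Pi n, Pi_le (Some B) w.
  case=> // W u v /star_some [H _]; lia.
have Hdisj : forall (P Q : PForest n) r1 k1 r2 k2,
    proj1_sig P = star n r1 k1 -> proj1_sig Q = star n r2 k2 ->
    (r1 + k1 <= r2)%N -> is_glb (@Pi_le n) (Some P) (Some Q) (Some B).
  move=> P Q r1 k1 r2 k2 EP EQ Hle; split; first exact: Bno.
  split; first exact: Bno.
  case=> // W HP HQ u v HW.
  move: (HP u v HW) (HQ u v HW); rewrite EP EQ.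
  move=> /star_some [H1 _] /star_some [H2 _]; lia.
have XB : Some X <> Some B.
  move=> [E].
  have : proj1_sig X (inord 3) = proj1_sig B (inord 3) by rewrite /= E.
  rewrite /= !ffunE inordK; last lia.
  by [].
apply: XB; apply: (D (Some X) (Some Y) (Some Z) None (Some X) (Some B) (Some B) (Some B)).
- split => //; split => //.
  case=> // W HY HZ.
  have v2 : (2 < n.+1)%N by lia.
  have E1 := HY (inord 0) (inord 2).
  have E2 := HZ (inord 1) (inord 2).
  rewrite /= !ffunE inordK // in E1 E2.
  have := E1 erefl; rewrite (E2 erefl) => -[] /(congr1 (@nat_of_ord _)).
  rewrite !inordK //; lia.
- split; first by move=> u v.
  by split => // w H _.
- have [A [C _]] := Hdisj Y X 0 2 2 1 erefl erefl isT.
  split=> //; split=> // w h1 h2.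
  have [_ [_ F]] := Hdisj Y X 0 2 2 1 erefl erefl isT.
  exact: F.
- have [A [C F]] := Hdisj Z X 1 1 2 1 erefl erefl isT.
  by split=> //; split=> // w h1 h2; apply: F.
- by split => //; split.
Qed.
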